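(* Let $R = \mathbb{Z} \times \mathbb{Z}$ with coordinatewise addition and multiplication $(a,b)\cdot(c,d) = (ac, ad+bc)$, and consider the template $(\mathbb{Z}^+ \times \mathbb{N}, \mathbb{N}^2, \mathbb{N}^2)$ in $R$. Suppose $a_1, a_2 \in \mathbb{Z}^+$ are coprime, $b \in \mathbb{N}$, $\alpha_1 = (a_1, 0)$ and $\alpha_2 = (a_2, b)$. Then \[ \mathrm{Frob}(\alpha_1, \alpha_2) = \left(\chi(a_1,a_2),\ \chi(a_1,a_2) + b(a_1 - 1)\right) + \mathbb{N}^2. \]
   Context: $\mathbb{N}$ denotes the nonnegative integers, $\mathbb{Z}^+ = \mathbb{N}\setminus\{0\}$. For coprime positive integers $a_1,a_2$, $\chi(a_1,a_2)$ denotes the least $w \in \mathbb{N}$ such that $w + \mathbb{N} \subseteq \{\lambda_1 a_1 + \lambda_2 a_2 : \lambda_1,\lambda_2 \in \mathbb{N}\}$; it equals $(a_1-1)(a_2-1)$. For the template above, $MN(\alpha_1, \alpha_2) = \{\alpha_1\lambda_1 + \alpha_2\lambda_2 : \lambda_1,\lambda_2 \in \mathbb{N}^2\} = \{(a_1c_1 + a_2c_2,\ a_1d_1 + a_2d_2 + bc_2) : c_1,c_2,d_1,d_2 \in \mathbb{N}\}$, and $\mathrm{Frob}(\alpha_1, \alpha_2) = \{w \in R : w + \mathbb{N}^2 \subseteq MN(\alpha_1, \alpha_2)\}$. *)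

(* Defs.v *)
From Stdlib Require Import ZArith Lia.
Open Scope Z_scope.

Definition RZ : Type := (Z * Z)%type.
Definition radd (x y : RZ) : RZ := (fst x + fst y, snd x + snd y).
Definition rmul (x y : RZ) : RZ :=
  (fst x * fst y, fst x * snd y + snd x * fst y).

Definition inN2 (x : RZ) : Prop := 0 <= fst x /\ 0 <= snd x.

Definition MN (al1 al2 : RZ) (w : RZ) : Prop :=
  exists l1 l2 : RZ, inN2 l1 /\ inN2 l2 /\ w = radd (rmul al1 l1) (rmul al2 l2).

Definition Frob (al1 al2 : RZ) (w : RZ) : Prop :=
  forall n : RZ, inN2 n -> MN al1 al2 (radd w n).

Definition NS2 (a1 a2 : Z) (v : Z) : Prop :=
  exists l1 l2 : Z, 0 <= l1 /\ 0 <= l2 /\ v = l1 * a1 + l2 * a2.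

Definition conductor_bound (a1 a2 w : Z) : Prop :=
  forall v, w <= v -> NS2 a1 a2 v.

Definition is_chi (a1 a2 c : Z) : Prop :=
  0 <= c /\ conductor_bound a1 a2 c /\
  (forall w, 0 <= w -> conductor_bound a1 a2 w -> c <= w).

(* Main.v *)
Require Import Defs.
From Stdlib Require Import ZArith Lia.
Open Scope Z_scope.

Lemma frob_not_in (a1 a2 c : Z) : 0 < a1 -> 0 < a2 -> is_chi a1 a2 c ->
  ~ NS2 a1 a2 (c - 1).
Proof.
  intros h1 h2 [hc0 [hcb hmin]] [l1 [l2 [p1 [p2 e]]]].
  destruct (Z.eq_dec c 0) as [->|hc]; [nia|].
  assert (c <= c - 1); [|lia].
  apply hmin; [lia|].
  intros v hv. destruct (Z.eq_dec v (c-1)) as [->|hne].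
  - exists l1, l2; auto.
  - apply hcb; lia.
Qed.

Theorem proposition4p5 (a1 a2 b c : Z) :
  0 < a1 -> 0 < a2 -> Z.gcd a1 a2 = 1 -> 0 <= b ->
  is_chi a1 a2 c ->
  forall w : RZ,
    Frob (a1, 0) (a2, b) w <->
    exists n : RZ, inN2 n /\ w = radd (c, c + b * (a1 - 1)) n.
Proof.
  intros h1 h2 hg hb hchi [w1 w2]. split.
  - intros H.
    destruct (H (0,0)) as [[p q] [[r s] [[hp hq] [[hr hs] e]]]]; [split; simpl; lia|].
    unfold radd, rmul in *; simpl in *. injection e as e1 e2.
    assert (hw1 : c <= w1).
    { destruct hchi as [hc0 [hcb hmin]]. apply hmin; [nia|].
      intros v hv.
      destruct (H (v - w1, 0)) as [[p' q'] [[r' s'] [[hp' hq'] [[hr' hs'] e']]]];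
        [split; simpl; lia|].
      unfold radd, rmul in *; simpl in *. injection e' as e1' e2'.
      exists p', r'. split; [lia|split;[lia|lia]]. }
    assert (hw2 : c + b * (a1 - 1) <= w2).
    { destruct (Z_lt_le_dec w2 (c + b * (a1 - 1))) as [hlt|]; [|assumption].
      exfalso.
      set (x := a1 * w1 + a2 * (a1 - 1)).
      set (y := c - 1 + b * (a1 - 1)).
      destruct (H (x - w1, y - w2)) as [[p' q'] [[r' s'] [[hp' hq'] [[hr' hs'] e']]]];
        [split; simpl; unfold x, y; nia|].
      unfold radd, rmul in *; simpl in *. injection e' as e1' e2'.
      assert (hd : (a1 | a2 * (r' - (a1 - 1)))).
      { exists (w1 - p'). unfold x in e1'. lia. }
      apply Z.gauss in hd; [|exact hg].
      destruct hd as [t ht].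
      assert (ht0 : 0 <= t) by nia.
      apply (frob_not_in a1 a2 c h1 h2 hchi).
      exists (q' + b * t), s'. split; [nia|split;[lia|]].
      unfold y in e2'. nia. }
    exists (w1 - c, w2 - (c + b * (a1 - 1))). split; [split; simpl; lia|].
    unfold radd; simpl; f_equal; lia.
  - intros [[n1 n2] [[hn1 hn2] e]] [m1 m2] [hm1 hm2]. simpl in *.
    unfold radd in e; simpl in e. injection e as e1 e2. subst.
    destruct hchi as [hc0 [hcb hmin]].
    destruct (hcb (c + n1 + m1)) as [l1 [l2 [hl1 [hl2 el]]]]; [lia|].
    set (c2 := l2 mod a1).
    assert (hc2 : 0 <= c2 < a1) by (apply Z.mod_pos_bound; lia).
    assert (hdiv := Z.div_mod l2 a1 ltac:(lia)).
    assert (hq : 0 <= l2 / a1) by (apply Z.div_pos; lia).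
    destruct (hcb (c + b * (a1 - 1) + n2 + m2 - b * c2)) as [k1 [k2 [hk1 [hk2 ek]]]]; [nia|].
    exists (l1 + (l2 / a1) * a2, k1), (c2, k2).
    split; [split; simpl; nia|split;[split; simpl; lia|]].
    unfold radd, rmul; simpl. f_equal.
    + fold c2 in hdiv. nia.
    + nia.
Qed.
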